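(* Let $\omega_\xi$ be a pure translation-invariant stabilizer state on the spin-$1/2$ chain whose stabilizer generator $W(\xi)$ has length $2n+1$. Then with respect to any bipartite cut of the chain into a left and a right half-chain, $\omega_\xi$ contains exactly $n$ maximally entangled qubit pairs, i.e. $E(\omega_\xi)=\frac{\mathrm{length}(\xi)-1}{2}=n$.
   Context: $\mathcal{P}$ = Laurent polynomials in $u$ over $\mathbb{Z}_2$, $\mathcal{R}$ its palindromes. For $\xi=(\xi_+,\xi_-)\in\mathcal{P}^2$, $W(\xi)=\bigotimes_x W(\xi_+(x),\xi_-(x))$ on the chain $\bigotimes_{x\in\mathbb{Z}}M_2$ (coefficient of $u^x$ at site $x$), with $W(0,0)=\mathbb{1},W(1,0)=\sigma_1,W(0,1)=\sigma_3,W(1,1)=-i\sigma_2$. For $\xi$ reflection invariant ($\xi_\pm\in\mathcal{R}$) with $\gcd(\xi_+,\xi_-)=1$, the pure translation-invariant stabilizer state $\omega_\xi$ is the unique state with $\omega_\xi(A)=1$ for all $A$ in the stabilizer group $\mathcal{S}$ generated by all lattice translates of $W(\xi)$. The length of $\xi$ is the number of sites between the leftmost and rightmost non-identity factor of $W(\xi)$, inclusive (it equals $2\deg\xi+1$, $\deg\xi$ the highest exponent occurring in $\xi_\pm$). For a cut into half-chains $A$ (left) and $B$ (right), $E(\omega_\xi)$, the number of maximally entangled qubit pairs, is the number of pairs $(W(\eta^i),W(\zeta^i))$ of elements of $\mathcal{S}$ supported on both sides of the cut whose restrictions to $A$ anticommute within each pair, commute between different pairs, and commute with every element of $\mathcal{S}$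 supported entirely in $A$ (each such pair behaves as a pair $(\sigma_1^A\otimes\sigma_1^B,\sigma_3^A\otimes\sigma_3^B)$ stabilizing a Bell pair), taken maximal. *)

(* Defs.v *)
From HB Require Import structures.
From mathcomp Require Import all_boot all_order all_algebra.
Set Implicit Arguments. Unset Strict Implicit. Unset Printing Implicit Defensive.
Import Order.TTheory GRing.Theory Num.Theory.
Local Open Scope ring_scope.

(** Laurent polynomials over Z_2: [Laurent p k] represents u^{-k} * p(u). *)
Record laurent := Laurent { lpoly : {poly 'F_2}; lshift : nat }.

Definition coefL (f : laurent) (x : int) : 'F_2 :=
  if (0 <= x + (lshift f)%:Z) then (lpoly f)`_(absz (x + (lshift f)%:Z)) else 0.

Definition lmul (f g : laurent) : laurent :=
  Laurent (lpoly f * lpoly g) (lshift f + lshift g).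

Definition lone : laurent := Laurent 1 0.

Definition leq_L (f g : laurent) : Prop := forall x, coefL f x = coefL g x.

Definition ldvd (d f : laurent) : Prop := exists g, leq_L f (lmul d g).
Definition lunit (d : laurent) : Prop := exists g, leq_L (lmul d g) lone.
Definition lcoprime (f g : laurent) : Prop :=
  forall d, ldvd d f -> ldvd d g -> lunit d.

Definition palindrome (f : laurent) : Prop := forall x, coefL f x = coefL f (- x).

(** Pauli labels xi = (xi_+, xi_-) in P^2 *)
Definition label := (laurent * laurent)%type.

(** W(xi) has a non-identity tensor factor at site x *)
Definition nonid (xi : label) (x : int) : Prop :=
  coefL xi.1 x != 0 \/ coefL xi.2 x != 0.

Definition has_length (xi : label) (m : nat) : Prop :=
  exists lo hi : int, [/\ nonid xi lo, nonid xi hi,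
    (forall x, nonid xi x -> lo <= x <= hi) & hi - lo + 1 = m%:Z].

(** W(eta) is (up to a phase) an element of the stabilizer group generated
    by all lattice translates of W(xi): eta = f * xi for some Laurent f *)
Definition inS (xi eta : label) : Prop :=
  exists f, leq_L eta.1 (lmul f xi.1) /\ leq_L eta.2 (lmul f xi.2).

(** cut between sites c-1 and c: A = {x < c}, B = {x >= c} *)
Definition supp_both (c : int) (eta : label) : Prop :=
  (exists x, x < c /\ nonid eta x) /\ (exists y, c <= y /\ nonid eta y).

Definition supp_in_A (c : int) (eta : label) : Prop :=
  forall x, nonid eta x -> x < c.

(** symplectic form of the restrictions to A (sites x < c):
    0 = restrictions commute, 1 = anticommute.  Sum over x in [-M, c) where
    M bounds all shifts, so that all nonzero terms are included. *)
Definition sigmaA (c : int) (eta zeta : label) : 'F_2 :=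
  let M := maxn (maxn (lshift eta.1) (lshift eta.2))
                (maxn (lshift zeta.1) (lshift zeta.2)) in
  let N := if (0 <= c + M%:Z) then absz (c + M%:Z) else 0%N in
  \sum_(i < N)
    (coefL eta.1 (i%:Z - M%:Z) * coefL zeta.2 (i%:Z - M%:Z)
     + coefL eta.2 (i%:Z - M%:Z) * coefL zeta.1 (i%:Z - M%:Z)).

(** a family of k pairs (W(eta^i), W(zeta^i)) of maximally entangled
    qubit pairs across the cut c, as in the definition of E(omega_xi) *)
Definition bell_family (xi : label) (c : int) (k : nat)
    (eta zeta : 'I_k -> label) : Prop :=
  [/\ (forall i, inS xi (eta i) /\ inS xi (zeta i)),
      (forall i, supp_both c (eta i) /\ supp_both c (zeta i)),
      (forall i, sigmaA c (eta i) (zeta i) = 1),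
      (forall i j, i != j ->
         [/\ sigmaA c (eta i) (eta j) = 0, sigmaA c (eta i) (zeta j) = 0
           & sigmaA c (zeta i) (zeta j) = 0])
    & (forall i theta, inS xi theta -> supp_in_A c theta ->
         sigmaA c (eta i) theta = 0 /\ sigmaA c (zeta i) theta = 0)].

Definition entanglement_is (xi : label) (c : int) (m : nat) : Prop :=
  (exists eta zeta : 'I_m -> label, bell_family xi c eta zeta) /\
  (forall k (eta zeta : 'I_k -> label), bell_family xi c eta zeta -> (k <= m)%N).

(* Main.v *)
Require Import Defs.
From HB Require Import structures.
From mathcomp Require Import all_boot all_order all_algebra.
From mathcomp Require Import zify ring lra.
From Stdlib Require Import Classical.
Require Import Defs.
Set Implicit Arguments. Unset Strict Implicit. Unset Printing Implicit Defensive.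
Import Order.TTheory GRing.Theory Num.Theory.
Local Open Scope ring_scope.

Definition nZ (lo hi : int) : nat := if lo <= hi then absz (hi - lo) else 0%N.
Definition sumZ (lo hi : int) (F : int -> 'F_2) : 'F_2 :=
  \sum_(0 <= i < nZ lo hi) F (lo + i%:Z).

Lemma sumZ_nil lo hi F : hi <= lo -> sumZ lo hi F = 0.
Proof.
move=> h; rewrite /sumZ /nZ; case: ifP => h2; last by rewrite big_geq.
have -> : hi = lo by apply/eqP; rewrite eq_le h h2.
by rewrite subrr big_geq.
Qed.

Lemma nZ_lt lo hi : lo < hi -> nZ lo hi = (nZ (lo + 1) hi).+1.
Proof.
move=> h; rewrite /nZ ltW // lezD1 h; lia.
Qed.

Lemma sumZ_recl lo hi F : lo < hi -> sumZ lo hi F = F lo + sumZ (lo + 1) hi F.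
Proof.
move=> h; rewrite /sumZ nZ_lt // big_nat_recl // addr0; apply: congr1.
by apply: eq_bigr => i _; congr F; lia.
Qed.

Lemma sumZ_ind (P : int -> int -> Prop) :
  (forall lo hi, hi <= lo -> P lo hi) ->
  (forall lo hi, lo < hi -> P (lo + 1) hi -> P lo hi) ->
  forall lo hi, P lo hi.
Proof.
move=> H0 HS lo hi.
have [k Hk] : exists k : nat, (hi - lo <= k%:Z). 
  by exists (absz (hi - lo)); lia.
elim: k lo Hk => [|k IH] lo Hk.
  by apply: H0; lia.
case: (leP hi lo) => h; first by apply: H0.
apply: HS => //; apply: IH; lia.
Qed.

Lemma sumZ_ext lo hi F G : (forall x, lo <= x < hi -> F x = G x) ->
  sumZ lo hi F = sumZ lo hi G.
Proof.
move: lo hi; apply: sumZ_ind => [lo hi h _|lo hi h IH E]; first by rewrite !sumZ_nil.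
rewrite (sumZ_recl F h) (sumZ_recl G h) E; last by rewrite lexx h.
rewrite IH // => x /andP[h1 h2]; apply: E; lia.
Qed.

Lemma sumZ0 lo hi F : (forall x, lo <= x < hi -> F x = 0) -> sumZ lo hi F = 0.
Proof.
move=> E; rewrite (@sumZ_ext _ _ _ (fun _ => 0)) //.
by rewrite /sumZ big1.
Qed.

Lemma sumZ_split lo m hi F : lo <= m -> m <= hi ->
  sumZ lo hi F = sumZ lo m F + sumZ m hi F.
Proof.
move: lo hi m; apply: sumZ_ind => [lo hi h m h1 h2|lo hi h IH m h1 h2].
  have e1 : m = lo by lia.
  have e2 : hi = lo by lia.
  by subst; rewrite !sumZ_nil ?lexx ?addr0.
case: (leP m lo) => h3.
  have -> : m = lo by lia.
  by rewrite (sumZ_nil _ (lexx lo)) add0r.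
rewrite (sumZ_recl F h) (IH m); try lia.
rewrite (@sumZ_recl lo m F h3) addrA //.
Qed.

Lemma sumZ_recr lo hi F : lo < hi -> sumZ lo hi F = sumZ lo (hi - 1) F + F (hi - 1).
Proof.
move=> h; rewrite (@sumZ_split lo (hi - 1) hi F); try lia.
rewrite (@sumZ_recl (hi - 1) hi F); last lia.
by rewrite (@sumZ_nil (hi - 1 + 1)) ?addr0 //; lia.
Qed.

Lemma sumZD lo hi F G : sumZ lo hi (fun x => F x + G x) = sumZ lo hi F + sumZ lo hi G.
Proof. by rewrite /sumZ big_split. Qed.

Lemma sumZMl lo hi a F : sumZ lo hi (fun x => a * F x) = a * sumZ lo hi F.
Proof. by rewrite /sumZ big_distrr. Qed.

Lemma sumZMr lo hi a F : sumZ lo hi (fun x => F x * a) = sumZ lo hi F * a.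
Proof. by rewrite /sumZ big_distrl. Qed.

Lemma sumZ_exch lo hi lo' hi' (F : int -> int -> 'F_2) :
  sumZ lo hi (fun x => sumZ lo' hi' (F x)) = sumZ lo' hi' (fun y => sumZ lo hi (fun x => F x y)).
Proof. by rewrite /sumZ exchange_big. Qed.

Lemma sumZ_sub lo hi lo' hi' F : lo <= lo' -> hi' <= hi ->
  (forall x, F x != 0 -> lo' <= x < hi') -> sumZ lo hi F = sumZ lo' hi' F.
Proof.
move=> h1 h2 S.
case: (ltP lo' hi') => h3.
  rewrite (sumZ_split F (m := lo')) //; last lia.
  rewrite (sumZ_split F (lo := lo') (m := hi')) //; try lia.
  rewrite (@sumZ0 lo lo') ?add0r; last first.
    move=> x hx; apply/eqP; apply/negPn/negP => /S; lia.
  rewrite (@sumZ0 hi' hi) ?addr0 //.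
  move=> x hx; apply/eqP; apply/negPn/negP => /S; lia.
rewrite (sumZ_nil _ h3) sumZ0 // => x _; apply/eqP; apply/negPn/negP => /S; lia.
Qed.

Lemma sumZ_supp lo hi lo' hi' F :
  (forall x, F x != 0 -> lo <= x < hi) ->
  (forall x, F x != 0 -> lo' <= x < hi') -> sumZ lo hi F = sumZ lo' hi' F.
Proof.
move=> S1 S2.
rewrite (@sumZ_sub lo hi (Num.max lo lo') (Num.min hi hi')); last first.
- move=> x hx; move: (S1 x hx) (S2 x hx); rewrite ge_max lt_min; lia.
- by rewrite ge_min lexx.
- by rewrite le_max lexx.
rewrite [RHS](@sumZ_sub lo' hi' (Num.max lo lo') (Num.min hi hi')) //.
- by rewrite le_max lexx orbT.
- by rewrite ge_min lexx orbT.
- move=> x hx; move: (S1 x hx) (S2 x hx); rewrite ge_max lt_min; lia.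
Qed.

Lemma sumZ_one lo hi F x0 : lo <= x0 < hi -> (forall x, x != x0 -> F x = 0) ->
  sumZ lo hi F = F x0.
Proof.
move=> h E; rewrite (@sumZ_sub lo hi x0 (x0 + 1)); try lia.
- by rewrite sumZ_recl ?ltzD1 // sumZ_nil ?addr0.
- move=> x; case: (eqVneq x x0) => [->|/E ->]; last by rewrite eqxx.
  by move=> _; lia.
Qed.

Lemma sumZ_rev lo hi a F :
  sumZ lo hi F = sumZ (a - hi + 1) (a - lo + 1) (fun x => F (a - x)).
Proof.
move: lo hi; apply: sumZ_ind => [lo hi h|lo hi h IH].
  by rewrite !sumZ_nil //; lia.
rewrite sumZ_recl // IH (@sumZ_recr (a - hi + 1) (a - lo + 1)); last lia.
rewrite addrC; congr (_ + _); first by congr sumZ; lia.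
by congr F; lia.
Qed.

Lemma sumZ_shift lo hi d F :
  sumZ lo hi F = sumZ (lo + d) (hi + d) (fun x => F (x - d)).
Proof.
move: lo hi; apply: sumZ_ind => [lo hi h|lo hi h IH].
  by rewrite !sumZ_nil //; lia.
rewrite sumZ_recl // IH (@sumZ_recl (lo + d)); last lia.
congr (_ + _); first by congr F; lia.
by congr sumZ; lia.
Qed.

Lemma sumZ_lo lo lo' hi F : lo <= lo' -> (forall x, lo <= x < lo' -> F x = 0) ->
  sumZ lo hi F = sumZ lo' hi F.
Proof.
move=> h E; case: (leP lo' hi) => h2.
  by rewrite (@sumZ_split lo lo' hi F) // sumZ0 ?add0r.
rewrite (@sumZ_nil lo' hi) ?sumZ0 // => [x hx|]; last lia.
by apply: E; lia.
Qed.

Lemma sumZ_mul2 lo hi lo' hi' F G :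
  sumZ lo hi F * sumZ lo' hi' G = sumZ lo hi (fun j => sumZ lo' hi' (fun k => F j * G k)).
Proof.
rewrite -sumZMr; apply: sumZ_ext => j _; by rewrite -sumZMl.
Qed.

Lemma coefL_supp f x : coefL f x != 0 ->
  - (lshift f)%:Z <= x < (size (lpoly f))%:Z - (lshift f)%:Z.
Proof.
rewrite /coefL; case: ifP => h; last by rewrite eqxx.
move=> nz; have : (absz (x + (lshift f)%:Z)%R < size (lpoly f))%N.
  by rewrite ltnNge; apply/negP => /(nth_default 0) e; rewrite e eqxx in nz.
lia.
Qed.

Lemma coefL_lmul f g x lo hi :
  (forall j, coefL f j != 0 -> lo <= j < hi) ->
  coefL (lmul f g) x = sumZ lo hi (fun j => coefL f j * coefL g (x - j)).
Proof.
move=> S.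
have Sg : forall y, coefL g y != 0 -> - (lshift g)%:Z <= y by move=> y /coefL_supp; lia.
have Sf : forall y, coefL f y != 0 -> - (lshift f)%:Z <= y by move=> y /coefL_supp; lia.
rewrite {1}/coefL /lmul /=.
case: ifP => h0; last first.
  rewrite sumZ0 // => j _; case: (eqVneq (coefL f j) 0) => [->|/Sf h1]; first by rewrite mul0r.
  case: (eqVneq (coefL g (x - j)) 0) => [->|/Sg h2]; first by rewrite mulr0.
  exfalso; move: h0; lia.
rewrite (@sumZ_supp lo hi (- (lshift f)%:Z) (x + (lshift g)%:Z + 1)); last first.
- move=> j; case: (eqVneq (coefL f j) 0) => [->|/Sf h1]; first by rewrite mul0r eqxx.
  case: (eqVneq (coefL g (x - j)) 0) => [->|/Sg h2]; first by rewrite mulr0 eqxx.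
  move=> _; lia.
- move=> j; case: (eqVneq (coefL f j) 0) => [->|/S //]; by rewrite mul0r eqxx.
rewrite coefM /sumZ.
have -> : nZ (- (lshift f)%:Z) (x + (lshift g)%:Z + 1) = (absz (x + (lshift f + lshift g)%N%:Z)%R).+1.
  rewrite /nZ; case: ifP => h1; lia.
rewrite big_mkord; apply: eq_bigr => [[k hk]] _ /=.
rewrite /coefL; have -> : (0 <= - (lshift f)%:Z + k%:Z + (lshift f)%:Z) by lia.
have -> : (0 <= x - (- (lshift f)%:Z + k%:Z) + (lshift g)%:Z) by lia.
congr (_ `_ _ * _ `_ _); lia.
Qed.

Lemma coefL_X p s k x : 0 <= x + s%:Z + k%:Z ->
  coefL (Laurent p s) x = (p * 'X^k)`_(absz (x + s%:Z + k%:Z)).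
Proof.
move=> h; rewrite /coefL /= coefMXn.
case: ifP => h1.
  have -> : (absz (x + s%:Z + k%:Z)%R < k)%N = false by lia.
  congr (_ `_ _); lia.
have -> : (absz (x + s%:Z + k%:Z)%R < k)%N = true by lia.
done.
Qed.

Lemma leqLP p s q t : leq_L (Laurent p s) (Laurent q t) <-> p * 'X^t = q * 'X^s.
Proof.
split=> [E|E x].
  apply/polyP => i.
  have := E (i%:Z - s%:Z - t%:Z).
  rewrite (coefL_X p (k := t)); last lia.
  rewrite (coefL_X q (k := s)); last lia.
  have -> : absz (i%:Z - s%:Z - t%:Z + s%:Z + t%:Z)%R = i by lia.
  by have -> : absz (i%:Z - s%:Z - t%:Z + t%:Z + s%:Z)%R = i by lia.
case: (boolP (0 <= x + s%:Z + t%:Z)) => h.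
  rewrite (coefL_X p (k := t)) // (coefL_X q (k := s)); last lia.
  rewrite E; congr (_ `_ _); lia.
rewrite /coefL /=; case: ifP; first lia.
case: ifP => //; lia.
Qed.

Lemma leqL_refl f : leq_L f f. Proof. by []. Qed.
Lemma leqL_sym f g : leq_L f g -> leq_L g f. Proof. by move=> E x; rewrite E. Qed.
Lemma leqL_trans f g h : leq_L f g -> leq_L g h -> leq_L f h.
Proof. by move=> E1 E2 x; rewrite E1 E2. Qed.

Definition ladd (f g : laurent) : laurent :=
  Laurent (lpoly f * 'X^(lshift g) + lpoly g * 'X^(lshift f)) (lshift f + lshift g).

Lemma coefL_ladd f g x : coefL (ladd f g) x = coefL f x + coefL g x.
Proof.
case: f g => [p s] [q t].
case: (boolP (0 <= x + s%:Z + t%:Z)) => h.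
  rewrite /ladd /= (coefL_X _ (k := 0)); last lia.
  rewrite (coefL_X p (k := t)); last lia.
  rewrite (coefL_X q (k := s)); last lia.
  rewrite expr0 mulr1 coefD; congr (_ `_ _ + _ `_ _); lia.
rewrite /coefL /=; case: ifP; first lia.
case: ifP; first lia.
case: ifP; first lia.
by rewrite addr0.
Qed.

Lemma leqL_mul f f' g g' : leq_L f f' -> leq_L g g' -> leq_L (lmul f g) (lmul f' g').
Proof.
case: f f' g g' => [p s] [p' s'] [q t] [q' t'] /leqLP E1 /leqLP E2.
apply/leqLP => /=; rewrite !exprD.
have -> : p * q * ('X^s' * 'X^t') = (p * 'X^s') * (q * 'X^t') by ring.
by rewrite E1 E2; ring.
Qed.

Lemma leqL_add f f' g g' : leq_L f f' -> leq_L g g' -> leq_L (ladd f g) (ladd f' g').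
Proof.
move=> E1 E2 x; by rewrite !coefL_ladd E1 E2.
Qed.

Lemma F2_add_self (a : 'F_2) : a + a = 0.
Proof. by apply: addrr_pchar2; apply: pchar_Fp. Qed.

Lemma F2_eq1 (a : 'F_2) : a != 0 -> a = 1.
Proof. case: a => [[|[|m]] hm] //= _; first by apply/val_inj. Qed.

Section Omega.
Variable xi : label.
Variable n : nat.
Variable c : int.
Hypothesis Hs1 : forall p, coefL xi.1 p != 0 -> - n%:Z <= p <= n%:Z.
Hypothesis Hs2 : forall p, coefL xi.2 p != 0 -> - n%:Z <= p <= n%:Z.

Definition Bf p q := coefL xi.1 p * coefL xi.2 q + coefL xi.2 p * coefL xi.1 q.
Definition Om j k := sumZ (j - n%:Z) c (fun x => Bf (x - j) (x - k)).

Lemma Bf_supp p q : Bf p q != 0 -> (- n%:Z <= p <= n%:Z) /\ (- n%:Z <= q <= n%:Z).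
Proof.
rewrite /Bf.
case: (eqVneq (coefL xi.1 p) 0) => [->|/Hs1 h1];
case: (eqVneq (coefL xi.2 p) 0) => [->|/Hs2 h2];
case: (eqVneq (coefL xi.1 q) 0) => [->|/Hs1 h3];
case: (eqVneq (coefL xi.2 q) 0) => [->|/Hs2 h4];
rewrite ?mulr0 ?mul0r ?addr0 ?eqxx //.
Qed.

Lemma Om_lo lo j k : lo <= j - n%:Z ->
  sumZ lo c (fun x => Bf (x - j) (x - k)) = Om j k.
Proof.
move=> h; apply: sumZ_lo => // x hx; apply/eqP/negPn/negP => /Bf_supp; lia.
Qed.

Lemma Om_hi1 j k : c + n%:Z <= j -> Om j k = 0.
Proof. move=> h; apply: sumZ_nil; lia. Qed.

Lemma Om_hi2 j k : c + n%:Z <= k -> Om j k = 0.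
Proof.
move=> h; apply: sumZ0 => x hx; apply/eqP/negPn/negP => /Bf_supp; lia.
Qed.

Lemma Om_sym j k : Om j k = Om k j.
Proof.
rewrite -(@Om_lo (Num.min (j - n%:Z) (k - n%:Z)) j k) ?ge_min ?lexx //.
rewrite -(@Om_lo (Num.min (j - n%:Z) (k - n%:Z)) k j) ?ge_min ?lexx ?orbT //.
apply: sumZ_ext => x _; rewrite /Bf; ring.
Qed.

Lemma Om_diag j : Om j j = 0.
Proof. by apply: sumZ0 => x _; rewrite /Bf mulrC F2_add_self. Qed.

Hypothesis Hp1 : palindrome xi.1.
Hypothesis Hp2 : palindrome xi.2.

Lemma Om_lo_zero j k : j < c - n%:Z -> Om j k = 0.
Proof.
move=> h.
have nz1 : forall p, coefL xi.1 p != 0 -> - n%:Z <= p <= n%:Z by [].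
rewrite /Om (@sumZ_sub _ _ (j - n%:Z) (j + n%:Z + 1)); first last.
- move=> x /Bf_supp; lia.
- lia.
- lia.
rewrite /Bf sumZD.
set S1 := sumZ _ _ _.
rewrite (sumZ_rev _ _ (j + k)).
rewrite (@sumZ_ext _ _ _ (fun x => coefL xi.1 (x - j) * coefL xi.2 (x - k))); last first.
  move=> x _; rewrite mulrC Hp1 Hp2; congr (_ * _); congr coefL; lia.
rewrite (@sumZ_supp _ _ (j - n%:Z) (j + n%:Z + 1)) ?F2_add_self //.
- move=> x; case: (eqVneq (coefL xi.1 (x - j)) 0) => [->|/Hs1 h1]; first by rewrite mul0r eqxx.
  case: (eqVneq (coefL xi.2 (x - k)) 0) => [->|/Hs2 h2]; first by rewrite mulr0 eqxx.
  move=> _; lia.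
- move=> x; case: (eqVneq (coefL xi.1 (x - j)) 0) => [->|/Hs1 h1]; first by rewrite mul0r eqxx.
  case: (eqVneq (coefL xi.2 (x - k)) 0) => [->|/Hs2 h2]; first by rewrite mulr0 eqxx.
  move=> _; lia.
Qed.

End Omega.

Definition Mx (eta zeta : label) : nat := maxn (maxn (lshift eta.1) (lshift eta.2))
                (maxn (lshift zeta.1) (lshift zeta.2)).

Definition Tm (eta zeta : label) x :=
  coefL eta.1 x * coefL zeta.2 x + coefL eta.2 x * coefL zeta.1 x.

Lemma sigmaA_sumZ c eta zeta :
  sigmaA c eta zeta = sumZ (- (Mx eta zeta)%:Z) c (Tm eta zeta).
Proof.
rewrite /sigmaA /sumZ -/(Mx eta zeta) big_mkord.
have -> : nZ (- (Mx eta zeta)%:Z) c =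
   (if 0 <= c + (Mx eta zeta)%:Z then absz (c + (Mx eta zeta)%:Z)%R else 0%N).
  rewrite /nZ; case: ifP; case: ifP => //; lia.
by apply: eq_bigr => i _; rewrite /Tm (addrC (- _)).
Qed.

Lemma coefL_lo f x : x < - (lshift f)%:Z -> coefL f x = 0.
Proof. move=> h; apply/eqP/negPn/negP => /coefL_supp; lia. Qed.

Lemma Tm_lo eta zeta x : x < - (Mx eta zeta)%:Z -> Tm eta zeta x = 0.
Proof.
move=> h; rewrite /Tm /Mx in h *.
rewrite (@coefL_lo eta.1) ?(@coefL_lo eta.2) ?mul0r ?addr0 //; lia.
Qed.

Section Exp.
Variable xi : label.
Variable n : nat.
Variable c : int.
Hypothesis Hs1 : forall p, coefL xi.1 p != 0 -> - n%:Z <= p <= n%:Z.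
Hypothesis Hs2 : forall p, coefL xi.2 p != 0 -> - n%:Z <= p <= n%:Z.

Definition eqlab (eta : label) f := leq_L eta.1 (lmul f xi.1) /\ leq_L eta.2 (lmul f xi.2).

Lemma sigmaA_exp eta zeta f g lo hi :
  eqlab eta f -> eqlab zeta g ->
  (forall j, coefL f j != 0 -> lo <= j < hi) -> (forall j, coefL g j != 0 -> lo <= j < hi) ->
  sigmaA c eta zeta =
  sumZ lo hi (fun j => sumZ lo hi (fun k => coefL f j * coefL g k * Om xi n c j k)).
Proof.
move=> [E1 E2] [F1 F2] Sf Sg.
rewrite sigmaA_sumZ.
set M := Mx eta zeta.
rewrite -(@sumZ_lo (- M%:Z - `|lo - n%:Z|%:Z) (- M%:Z)); first last.
- by move=> x hx; apply: Tm_lo; lia.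
- lia.
set l := (- M%:Z - _).
rewrite (@sumZ_ext _ _ _ (fun x => sumZ lo hi (fun j => sumZ lo hi (fun k =>
   coefL f j * coefL g k * Bf xi (x - j) (x - k))))); last first.
  move=> x _; rewrite /Tm E1 E2 F1 F2.
  rewrite !(@coefL_lmul f _ _ lo hi) // !(@coefL_lmul g _ _ lo hi) //.
  rewrite !sumZ_mul2 -sumZD. eapply sumZ_ext => j _.
  rewrite -sumZD; apply: (@sumZ_ext lo hi) => k _; rewrite /Bf; ring.
rewrite [LHS]sumZ_exch; eapply sumZ_ext => j hj.
rewrite [LHS]sumZ_exch; eapply sumZ_ext => k hk.
rewrite sumZMl (@Om_lo xi n c Hs1 Hs2) //; lia.
Qed.

End Exp.

Section Supp.
Variable xi : label.
Variable n : nat.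
Hypothesis Hs1 : forall p, coefL xi.1 p != 0 -> - n%:Z <= p <= n%:Z.
Hypothesis Hs2 : forall p, coefL xi.2 p != 0 -> - n%:Z <= p <= n%:Z.
Hypothesis Hn : coefL xi.1 n%:Z != 0 \/ coefL xi.2 n%:Z != 0.
Hypothesis Hp1 : palindrome xi.1.
Hypothesis Hp2 : palindrome xi.2.

Lemma coef_cancel (a : 'F_2) : a * coefL xi.1 n%:Z = 0 -> a * coefL xi.2 n%:Z = 0 -> a = 0.
Proof.
move=> e1 e2; case: Hn => h.
  by move/eqP: e1; rewrite mulf_eq0 (negbTE h) orbF => /eqP.
by move/eqP: e2; rewrite mulf_eq0 (negbTE h) orbF => /eqP.
Qed.

Lemma top_supp h c :
  (forall x, c <= x -> coefL (lmul h xi.1) x = 0 /\ coefL (lmul h xi.2) x = 0) ->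
  forall j, c - n%:Z <= j -> coefL h j = 0.
Proof.
move=> H.
set Bd := (size (lpoly h))%:Z - (lshift h)%:Z.
have base : forall j, Bd <= j -> coefL h j = 0.
  by move=> j hj; apply/eqP/negPn/negP => /coefL_supp; lia.
suff : forall t : nat, forall j, c - n%:Z <= j -> Bd - t%:Z <= j -> coefL h j = 0.
  move=> S j hj; apply: (S (absz (Bd - j))) => //; lia.
elim=> [|t IH] j h1 h2; first by apply: base; lia.
case: (boolP (Bd - t%:Z <= j)) => h3; first by apply: IH.
have Sh : forall y, coefL h y != 0 -> - (lshift h)%:Z <= y < Bd.
  by move=> y /coefL_supp.
have key : forall i : 'F_2, (forall p, coefL (if i == 0 then xi.1 else xi.2) p != 0 -> - n%:Z <= p <= n%:Z) ->
   coefL (lmul h (if i == 0 then xi.1 else xi.2)) (j + n%:Z) =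
   coefL h j * coefL (if i == 0 then xi.1 else xi.2) n%:Z.
  move=> i Hs.
  rewrite (coefL_lmul _ _ Sh).
  case: (eqVneq (coefL h j) 0) => [hz|hnz].
    rewrite hz mul0r sumZ0 // => y hy.
    case: (ltgtP y j) => hy2.
    - rewrite [coefL (if _ then _ else _) _](_ : _ = 0) ?mulr0 //.
      by apply/eqP/negPn/negP => /Hs; lia.
    - by rewrite IH ?mul0r //; lia.
    - by rewrite hy2 hz mul0r.
  rewrite (@sumZ_one _ _ _ j); first by congr (_ * coefL _ _); lia.
    by move: (Sh _ hnz).
  move=> y hy; case: (ltgtP y j) => hy2.
  - rewrite [coefL (if _ then _ else _) _](_ : _ = 0) ?mulr0 //.
    by apply/eqP/negPn/negP => /Hs; lia.
  - by rewrite IH ?mul0r //; lia.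
  - by rewrite hy2 eqxx in hy.
have [e1 e2] := H (j + n%:Z) ltac:(lia).
apply: coef_cancel.
  by rewrite -(key 0) //.
by rewrite -(key 1) //.
Qed.

Lemma bot_supp h c :
  (forall x, x < c -> coefL (lmul h xi.1) x = 0 /\ coefL (lmul h xi.2) x = 0) ->
  forall j, j < c + n%:Z -> coefL h j = 0.
Proof.
move=> H.
set Bd := - (lshift h)%:Z.
have base : forall j, j < Bd -> coefL h j = 0.
  by move=> j hj; apply/eqP/negPn/negP => /coefL_supp; lia.
suff : forall t : nat, forall j, j < c + n%:Z -> j < Bd + t%:Z -> coefL h j = 0.
  move=> S j hj; apply: (S (absz (j - Bd)).+1) => //; lia.
elim=> [|t IH] j h1 h2; first by apply: base; lia.
case: (boolP (j < Bd + t%:Z)) => h3; first by apply: IH.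
have Sh : forall y, coefL h y != 0 -> - (lshift h)%:Z <= y < (size (lpoly h))%:Z - (lshift h)%:Z.
  by move=> y /coefL_supp.
have key : forall i : 'F_2, (forall p, coefL (if i == 0 then xi.1 else xi.2) p != 0 -> - n%:Z <= p <= n%:Z) ->
   palindrome (if i == 0 then xi.1 else xi.2) ->
   coefL (lmul h (if i == 0 then xi.1 else xi.2)) (j - n%:Z) =
   coefL h j * coefL (if i == 0 then xi.1 else xi.2) n%:Z.
  move=> i Hs Hp.
  rewrite (coefL_lmul _ _ Sh).
  case: (eqVneq (coefL h j) 0) => [hz|hnz].
    rewrite hz mul0r sumZ0 // => y hy.
    case: (ltgtP y j) => hy2.
    - by rewrite IH ?mul0r //; lia.
    - rewrite [coefL (if _ then _ else _) _](_ : _ = 0) ?mulr0 //.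
      by apply/eqP/negPn/negP => /Hs; lia.
    - by rewrite hy2 hz mul0r.
  rewrite (@sumZ_one _ _ _ j); first by rewrite Hp; congr (_ * coefL _ _); lia.
    by move: (Sh _ hnz).
  move=> y hy; case: (ltgtP y j) => hy2.
  - by rewrite IH ?mul0r //; lia.
  - rewrite [coefL (if _ then _ else _) _](_ : _ = 0) ?mulr0 //.
    by apply/eqP/negPn/negP => /Hs; lia.
  - by rewrite hy2 eqxx in hy.
have [e1 e2] := H (j - n%:Z) ltac:(lia).
apply: coef_cancel.
  by rewrite -(key 0) //.
by rewrite -(key 1) //.
Qed.

End Supp.

Definition lo2 (f g : laurent) : int := - ((lshift f)%:Z + (lshift g)%:Z).
Definition hi2 (f g : laurent) : int := (size (lpoly f))%:Z + (size (lpoly g))%:Z.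

Lemma supp_l f g j : coefL f j != 0 -> lo2 f g <= j < hi2 f g.
Proof. move/coefL_supp; rewrite /lo2 /hi2; lia. Qed.
Lemma supp_r f g j : coefL g j != 0 -> lo2 f g <= j < hi2 f g.
Proof. move/coefL_supp; rewrite /lo2 /hi2; lia. Qed.

Lemma sigmaA_sym c eta zeta : sigmaA c eta zeta = sigmaA c zeta eta.
Proof.
rewrite !sigmaA_sumZ /Mx (maxnC (maxn _ _)); apply: sumZ_ext => x _.
rewrite /Tm; ring.
Qed.

Lemma sigmaA_self c eta : sigmaA c eta eta = 0.
Proof.
rewrite sigmaA_sumZ; apply: sumZ0 => x _; rewrite /Tm [X in _ + X]mulrC F2_add_self //.
Qed.

Section Ab.
Variable xi : label.
Variable n : nat.
Variable c : int.
Hypothesis Hs1 : forall p, coefL xi.1 p != 0 -> - n%:Z <= p <= n%:Z.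
Hypothesis Hs2 : forall p, coefL xi.2 p != 0 -> - n%:Z <= p <= n%:Z.
Hypothesis Hn : coefL xi.1 n%:Z != 0 \/ coefL xi.2 n%:Z != 0.
Hypothesis Hp1 : palindrome xi.1.
Hypothesis Hp2 : palindrome xi.2.

Lemma inS_A_top theta g : eqlab xi theta g -> supp_in_A c theta ->
  forall k, c - n%:Z <= k -> coefL g k = 0.
Proof.
move=> [E1 E2] HA; apply: (top_supp Hs1 Hs2 Hn) => x hx.
rewrite -E1 -E2; split; apply/eqP/negPn/negP => nz;
  have := HA x; rewrite /nonid => /(_ ltac:(by [left|right])); lia.
Qed.

Lemma ab eta theta f g : eqlab xi eta f -> eqlab xi theta g -> supp_in_A c theta ->
  sigmaA c eta theta = 0.
Proof.
move=> Ef Eg HA.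
have Z := inS_A_top Eg HA.
rewrite (@sigmaA_exp xi n c Hs1 Hs2 _ _ _ _ _ _ Ef Eg (@supp_l f g) (@supp_r f g)).
apply: sumZ0 => j _; apply: sumZ0 => k _.
case: (leP (c - n%:Z) k) => hk; first by rewrite Z // mulr0 mul0r.
rewrite (@Om_sym xi n c Hs1 Hs2). by rewrite (@Om_lo_zero xi n c Hs1 Hs2 Hp1 Hp2) // mulr0.
Qed.

End Ab.

Lemma sumZ_ord (c : int) (n : nat) F :
  sumZ (c - n%:Z) (c + n%:Z) F = \sum_(i < n + n) F (c - n%:Z + i%:Z).
Proof.
rewrite /sumZ big_mkord.
have -> : nZ (c - n%:Z) (c + n%:Z) = (n + n)%N by rewrite /nZ; case: ifP; lia.
by [].
Qed.

Section Mid.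
Variable xi : label.
Variable n : nat.
Variable c : int.
Hypothesis Hs1 : forall p, coefL xi.1 p != 0 -> - n%:Z <= p <= n%:Z.
Hypothesis Hs2 : forall p, coefL xi.2 p != 0 -> - n%:Z <= p <= n%:Z.
Hypothesis Hp1 : palindrome xi.1.
Hypothesis Hp2 : palindrome xi.2.

Definition pos (i : 'I_(n + n)) : int := c - n%:Z + i%:Z.
Definition Omm : 'M['F_2]_(n + n) := \matrix_(i, i') Om xi n c (pos i) (pos i').
Definition mid (f : laurent) : 'rV['F_2]_(n + n) := \row_i coefL f (pos i).

Lemma Om_out j k : ~~ ((c - n%:Z <= j < c + n%:Z) && (c - n%:Z <= k < c + n%:Z)) ->
  Om xi n c j k = 0.
Proof.
move=> h.
case: (ltP j (c - n%:Z)) => h1; first by rewrite (@Om_lo_zero xi n c Hs1 Hs2 Hp1 Hp2).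
case: (leP (c + n%:Z) j) => h2; first by rewrite Om_hi1.
case: (ltP k (c - n%:Z)) => h3.
  by rewrite (@Om_sym xi n c Hs1 Hs2) (@Om_lo_zero xi n c Hs1 Hs2 Hp1 Hp2).
case: (leP (c + n%:Z) k) => h4; first by rewrite (@Om_hi2 xi n c Hs1 Hs2).
exfalso; move: h; rewrite h1 h2 h3 h4 /=; lia.
Qed.

Lemma sigma_mid eta zeta f g : eqlab xi eta f -> eqlab xi zeta g ->
  sigmaA c eta zeta = \sum_(i < n + n) \sum_(i' < n + n) mid f 0 i * mid g 0 i' * Omm i i'.
Proof.
move=> Ef Eg.
rewrite (@sigmaA_exp xi n c Hs1 Hs2 _ _ _ _ _ _ Ef Eg (@supp_l f g) (@supp_r f g)).
rewrite (@sumZ_supp _ _ (c - n%:Z) (c + n%:Z)); first last.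
- move=> j nz; apply/negPn/negP => hj; move/eqP: nz; apply.
  by apply: sumZ0 => k _; rewrite Om_out ?mulr0 // negb_and hj.
- move=> j nz; apply/negPn/negP => hj; move/eqP: nz; apply.
  apply: sumZ0 => k _; case: (eqVneq (coefL f j) 0) => [->|/supp_l h]; first by rewrite !mul0r.
  by move: (h g); rewrite (negbTE hj).
rewrite sumZ_ord; apply: eq_bigr => i _.
rewrite (@sumZ_supp _ _ (c - n%:Z) (c + n%:Z)); first last.
- move=> k nz; apply/negPn/negP => hk; move/eqP: nz; apply.
  by rewrite Om_out ?mulr0 // negb_and hk orbT.
- move=> k; case: (eqVneq (coefL g k) 0) => [->|/supp_r h]; first by rewrite mulr0 mul0r eqxx.
  by move=> _; apply: h.
rewrite sumZ_ord; apply: eq_bigr => i' _.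
by rewrite !mxE.
Qed.

Lemma sigma_mid_mx eta zeta f g : eqlab xi eta f -> eqlab xi zeta g ->
  sigmaA c eta zeta = (mid f *m Omm *m (mid g)^T) 0 0.
Proof.
move=> Ef Eg; rewrite (sigma_mid Ef Eg) mxE.
rewrite (exchange_big); apply: eq_bigr => i' _.
rewrite !mxE big_distrl; apply: eq_bigr => i _.
by rewrite !mxE /= mulrAC.
Qed.

End Mid.

Definition Jm k : 'M['F_2]_(k + k) := block_mx 0 1%:M 1%:M 0.

Lemma Jm_unit k : Jm k \in unitmx.
Proof.
have e : Jm k *m Jm k = 1%:M.
  rewrite /Jm mulmx_block !mul0mx !mulmx0 !mul1mx !add0r !addr0.
  by rewrite [RHS]scalar_mx_block.
by case: (mulmx1_unit e).
Qed.

Section Upper.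
Variable xi : label.
Variable n : nat.
Variable c : int.
Hypothesis Hs1 : forall p, coefL xi.1 p != 0 -> - n%:Z <= p <= n%:Z.
Hypothesis Hs2 : forall p, coefL xi.2 p != 0 -> - n%:Z <= p <= n%:Z.
Hypothesis Hp1 : palindrome xi.1.
Hypothesis Hp2 : palindrome xi.2.

Lemma upper k (eta zeta : 'I_k -> label) : bell_family xi c eta zeta -> (k <= n)%N.
Proof.
case=> H1 _ H3 H4 _.
have [Fe HFe] : exists Fe : 'I_k -> laurent, forall i, eqlab xi (eta i) (Fe i).
  by apply: (@fin_all_exists _ (fun _ => laurent) (fun i f => eqlab xi _ f)) => i; case: (H1 i) => [[f hf] _]; exists f.
have [Fz HFz] : exists Fz : 'I_k -> laurent, forall i, eqlab xi (zeta i) (Fz i).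
  by apply: (@fin_all_exists _ (fun _ => laurent) (fun i f => eqlab xi _ f)) => i; case: (H1 i) => [_ [f hf]]; exists f.
pose X : 'M['F_2]_(k + k, n + n) := col_mx (\matrix_(i, j) mid n c (Fe i) 0 j)
                                        (\matrix_(i, j) mid n c (Fz i) 0 j).
have HG : X *m Omm xi n c *m X^T = Jm k.
  apply/matrixP => a b.
  have rowX : forall a, row a X = mid n c (match split a with inl i => Fe i | inr i => Fz i end).
    move=> a'; apply/rowP => j; rewrite !mxE.
    by case: (split a') => i; rewrite !mxE.
  have -> : (X *m Omm xi n c *m X^T) a b =
     (row a X *m Omm xi n c *m (row b X)^T) 0 0.
    by rewrite -row_mul !mxE; apply: eq_bigr => j _; rewrite !mxE.
  rewrite -[a]splitK -[b]splitK.
  case: (split a) => i; case: (split b) => j; rewrite !rowX !unsplitK /=.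
  - rewrite /Jm block_mxEul [RHS]mxE.
    rewrite -(@sigma_mid_mx xi n c Hs1 Hs2 Hp1 Hp2 _ _ _ _ (HFe i) (HFe j)).
    case: (eqVneq i j) => [->|ne]; first by rewrite sigmaA_self.
    by case: (H4 i j ne).
  - rewrite /Jm block_mxEur [RHS]mxE.
    rewrite -(@sigma_mid_mx xi n c Hs1 Hs2 Hp1 Hp2 _ _ _ _ (HFe i) (HFz j)).
    case: (eqVneq i j) => [->|ne]; first by rewrite H3.
    by case: (H4 i j ne).
  - rewrite /Jm block_mxEdl [RHS]mxE.
    rewrite -(@sigma_mid_mx xi n c Hs1 Hs2 Hp1 Hp2 _ _ _ _ (HFz i) (HFe j)) sigmaA_sym.
    case: (eqVneq i j) => [->|ne]; first by rewrite H3.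
    by case: (H4 j i); rewrite // eq_sym.
  - rewrite /Jm block_mxEdr [RHS]mxE.
    rewrite -(@sigma_mid_mx xi n c Hs1 Hs2 Hp1 Hp2 _ _ _ _ (HFz i) (HFz j)).
    case: (eqVneq i j) => [->|ne]; first by rewrite sigmaA_self.
    by case: (H4 i j ne).
have := mxrankM_maxl (X *m Omm xi n c) X^T.
rewrite HG mxrank_unit ?Jm_unit // => h1.
have h2 := mxrankM_maxl X (Omm xi n c).
have h3 := rank_leq_col X.
have h4 := leq_trans h1 (leq_trans h2 h3).
clear -h4; lia.
Qed.

End Upper.

Lemma Xn_neq0 k : ('X^k : {poly 'F_2}) != 0.
Proof. by rewrite expf_neq0 // polyX_eq0. Qed.

Lemma bezout_lc f g : lcoprime f g ->
  exists P Q K, leq_L (ladd (lmul P f) (lmul Q g)) (Laurent 'X^K 0).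
Proof.
case: f g => [pf sf] [pg sg] H.
set d := gcdp pf pg.
have [G hG] : lunit (Laurent d 0).
  apply: H.
    exists (Laurent (pf %/ d) sf); apply/leqLP => /=.
    by rewrite add0n (mulrC d) divpK ?dvdp_gcdl.
  exists (Laurent (pg %/ d) sg); apply/leqLP => /=.
  by rewrite add0n (mulrC d) divpK ?dvdp_gcdr.
case: G hG => pG sG /leqLP /= hG.
rewrite expr0 mulr1 mul1r add0n in hG.
have [[u1 u2] /= hu] := Bezoutp pf pg.
have e : u1 * pf + u2 * pg = d.
  case/eqpP: hu => [[c1 c2] /= /andP[h1 h2]].
  by rewrite (F2_eq1 h1) (F2_eq1 h2) !scale1r.
exists (Laurent (u1 * pG * 'X^sf) 0), (Laurent (u2 * pG * 'X^sg) 0), sG.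
apply/leqLP => /=; rewrite !add0n expr0 mulr1 -hG -e !exprD; ring.
Qed.

Lemma bez_alg (a1 a2 x1 x2 P Q : laurent) K :
  leq_L (lmul a1 x2) (lmul a2 x1) ->
  leq_L (ladd (lmul P x1) (lmul Q x2)) (Laurent 'X^K 0) ->
  leq_L (lmul (lmul (ladd (lmul a1 P) (lmul a2 Q)) (Laurent 1 K)) x1) a1 /\
  leq_L (lmul (lmul (ladd (lmul a1 P) (lmul a2 Q)) (Laurent 1 K)) x2) a2.
Proof.
case: a1 a2 x1 x2 P Q => [A1 s1] [A2 s2] [X1 t1] [X2 t2] [PP p] [QQ q].
move=> /leqLP /= E /leqLP /= Bz.
rewrite expr0 mulr1 in Bz.
rewrite !exprD in E Bz.
split; apply/leqLP => /=; rewrite !exprD.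
move/eqP: E; rewrite -subr_eq0 => /eqP E.
move/eqP: Bz; rewrite -subr_eq0 => /eqP Bz.
- apply: (@mulIf _ ('X^t2)); first by rewrite Xn_neq0.
  apply/eqP; rewrite -subr_eq0; apply/eqP.
  transitivity ((A1 * X2 * ('X^s2 * 'X^t1) - A2 * X1 * ('X^s1 * 'X^t2)) * (- QQ * 'X^s1 * 'X^p)
    + (PP * X1 * ('X^q * 'X^t2) + QQ * X2 * ('X^p * 'X^t1) -
    'X^K * ('X^p * 'X^t1 * ('X^q * 'X^t2))) * (A1 * 'X^s1 * 'X^s2)).
    ring.
  by rewrite E Bz !mul0r addr0.
- apply: (@mulIf _ ('X^t1)); first by rewrite Xn_neq0.
  apply/eqP; rewrite -subr_eq0; apply/eqP.
  transitivity ((A1 * X2 * ('X^s2 * 'X^t1) - A2 * X1 * ('X^s1 * 'X^t2)) * (PP * 'X^s2 * 'X^q)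
    + (PP * X1 * ('X^q * 'X^t2) + QQ * X2 * ('X^p * 'X^t1) -
    'X^K * ('X^p * 'X^t1 * ('X^q * 'X^t2))) * (A2 * 'X^s1 * 'X^s2)).
    ring.
  by rewrite E Bz !subrr !mul0r addr0.
Qed.

Lemma coefL_lmul_addl f g p x :
  coefL (lmul (ladd f g) p) x = coefL (lmul f p) x + coefL (lmul g p) x.
Proof.
rewrite -coefL_ladd; move: x; apply/leqLP.
case: f g p => [a s] [b t] [q u] /=; rewrite !exprD; ring.
Qed.

Definition mkL (z : int) (p : {poly 'F_2}) : laurent :=
  if 0 <= z then Laurent (p * 'X^(absz z)) 0 else Laurent p (absz z).

Lemma coefL_mkL z p x : coefL (mkL z p) x = if 0 <= x - z then p`_(absz (x - z)) else 0.
Proof.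
rewrite /mkL; case: (boolP (0 <= z)) => hz; rewrite /coefL /=.
  rewrite addr0; case: (boolP (0 <= x)) => h1.
    rewrite coefMXn; case: ifP => h2.
      by case: ifP => h3 //; lia.
    rewrite (_ : 0 <= x - z); last lia.
    congr (_ `_ _); lia.
  by case: ifP => h3 //; lia.
have -> : x + (absz z)%:Z = x - z by lia.
by [].
Qed.

Definition restrA (c : int) (f : laurent) : laurent :=
  Laurent (\poly_(k < size (lpoly f)) (if k%:Z - (lshift f)%:Z < c then (lpoly f)`_k else 0))
    (lshift f).

Lemma coefL_restrA c f x : coefL (restrA c f) x = if x < c then coefL f x else 0.
Proof.
rewrite /coefL /restrA /=; case: ifP => h; last by case: ifP.
rewrite coef_poly; case: ifP => h2.
  have -> : ((absz (x + (lshift f)%:Z))%:Z - (lshift f)%:Z < c) = (x < c) by lia.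
  by [].
case: ifP => // _; rewrite nth_default //; lia.
Qed.

Definition lab (xi : label) (f : laurent) : label := (lmul f xi.1, lmul f xi.2).

Lemma eqlab_lab xi f : eqlab xi (lab xi f) f.
Proof. by split. Qed.

Lemma coefL_mkL1 k f x : coefL (lmul (mkL k 1) f) x = coefL f (x - k).
Proof.
rewrite (@coefL_lmul _ _ _ k (k + 1)); last first.
  move=> j; rewrite coefL_mkL; case: ifP => h; last by rewrite eqxx.
  rewrite coefC; case: ifP => h2 // _; lia.
rewrite (@sumZ_one _ _ _ k); first by rewrite coefL_mkL subrr lexx coefC /= mul1r.
  lia.
move=> j hj; rewrite coefL_mkL; case: ifP => h; last by rewrite mul0r.
rewrite coefC; case: ifP => h2; last by rewrite mul0r.
exfalso; move: hj; have -> : j = k by lia.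
by rewrite eqxx.
Qed.

Section ND.
Variable xi : label.
Variable n : nat.
Variable c : int.
Hypothesis Hs1 : forall p, coefL xi.1 p != 0 -> - n%:Z <= p <= n%:Z.
Hypothesis Hs2 : forall p, coefL xi.2 p != 0 -> - n%:Z <= p <= n%:Z.
Hypothesis Hn : coefL xi.1 n%:Z != 0 \/ coefL xi.2 n%:Z != 0.
Hypothesis Hp1 : palindrome xi.1.
Hypothesis Hp2 : palindrome xi.2.
Hypothesis Hcop : lcoprime xi.1 xi.2.

Lemma ND (v : 'rV['F_2]_(n + n)) : v *m Omm xi n c = 0 -> v = 0.
Proof.
move=> hv.
pose G := mkL (c - n%:Z) (\poly_(i < n + n) (if insub i is Some j then v 0 j else 0)).
have hG : forall i : 'I_(n + n), coefL G (pos c i) = v 0 i.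
  move=> i; rewrite coefL_mkL /pos.
  have -> : c - n%:Z + i%:Z - (c - n%:Z) = i%:Z by ring.
  by rewrite lez_nat coef_poly ltn_ord valK.
have midG : mid n c G = v by apply/rowP => i; rewrite mxE hG.
have Hsig : forall H, sigmaA c (lab xi G) (lab xi H) = 0.
  move=> H; rewrite (@sigma_mid_mx xi n c Hs1 Hs2 Hp1 Hp2 _ _ _ _ (eqlab_lab xi G) (eqlab_lab xi H)).
  by rewrite midG hv !mul0mx mxE.
pose a1 := restrA c (lmul G xi.1).
pose a2 := restrA c (lmul G xi.2).
have Ea : leq_L (lmul a1 xi.2) (lmul a2 xi.1).
  move=> k.
  have S := Hsig (mkL k 1).
  rewrite sigmaA_sumZ in S.
  set M := Mx _ _ in S.
  have hM1 : ((lshift (lmul G xi.1)) <= M)%N by rewrite /M /Mx /=; lia.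
  have hM2 : ((lshift (lmul G xi.2)) <= M)%N by rewrite /M /Mx /=; lia.
  have e1 : coefL (lmul a1 xi.2) k =
      sumZ (- M%:Z) c (fun x => coefL (lmul G xi.1) x * coefL xi.2 (x - k)).
    rewrite (@coefL_lmul _ _ _ (- M%:Z) c).
      apply: sumZ_ext => x hx; rewrite coefL_restrA.
      have -> : x < c by lia.
      by rewrite Hp2; congr (_ * coefL _ _); lia.
    move=> j; rewrite coefL_restrA; case: ifP => hj; last by rewrite eqxx.
    by move/coefL_supp; lia.
  have e2 : coefL (lmul a2 xi.1) k =
      sumZ (- M%:Z) c (fun x => coefL (lmul G xi.2) x * coefL xi.1 (x - k)).
    rewrite (@coefL_lmul _ _ _ (- M%:Z) c).
      apply: sumZ_ext => x hx; rewrite coefL_restrA.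
      have -> : x < c by lia.
      by rewrite Hp1; congr (_ * coefL _ _); lia.
    move=> j; rewrite coefL_restrA; case: ifP => hj; last by rewrite eqxx.
    by move/coefL_supp; lia.
  have : coefL (lmul a1 xi.2) k + coefL (lmul a2 xi.1) k = 0.
    rewrite e1 e2 -sumZD -S; apply: sumZ_ext => x _.
    by rewrite /Tm /= !coefL_mkL1.
  move=> e; rewrite -[LHS]addr0 -(F2_add_self (coefL (lmul a2 xi.1) k)) addrA e add0r //.
have [P [Q [K Bz]]] := bezout_lc Hcop.
have [h1 h2] := bez_alg Ea Bz.
set h := lmul (ladd _ _) (Laurent 1 K) in h1 h2.
have ht : forall j, c - n%:Z <= j -> coefL h j = 0.
  apply: (top_supp Hs1 Hs2 Hn) => x hx.
  rewrite h1 h2 !coefL_restrA.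
  by have -> : (x < c) = false by lia.
have hb : forall j, j < c + n%:Z -> coefL (ladd G h) j = 0.
  apply: (bot_supp Hs1 Hs2 Hn Hp1 Hp2) => x hx.
  by rewrite !coefL_lmul_addl h1 h2 !coefL_restrA hx !F2_add_self.
apply/rowP => i; rewrite mxE -hG.
have hi := ltn_ord i.
have hp1 : pos c i < c + n%:Z by rewrite /pos; lia.
have hp2 : c - n%:Z <= pos c i by rewrite /pos; lia.
by have := hb _ hp1; rewrite coefL_ladd ht // addr0.
Qed.

End ND.

Section Symp.
Variable V : lmodType 'F_2.
Variable b : V -> V -> 'F_2.
Hypothesis bD : forall x y z, b (x + y) z = b x z + b y z.
Hypothesis bZ : forall a x z, b (a *: x) z = a * b x z.
Hypothesis bsym : forall x y, b x y = b y x.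
Hypothesis balt : forall x, b x x = 0.

Lemma b0 z : b 0 z = 0.
Proof. by rewrite -(scale0r (0 : V)) bZ mul0r. Qed.

Lemma bZr a x z : b z (a *: x) = a * b z x.
Proof. by rewrite bsym bZ bsym. Qed.

Lemma bDr x y z : b z (x + y) = b z x + b z y.
Proof. by rewrite bsym bD !(bsym z). Qed.

Definition comb (s : seq nat) (vec : nat -> V) (cf : nat -> 'F_2) : V :=
  \sum_(i <- s) cf i *: vec i.

Lemma b_comb s vec cf z : b (comb s vec cf) z = \sum_(i <- s) cf i * b (vec i) z.
Proof.
rewrite /comb; elim: s => [|i s IH]; first by rewrite !big_nil b0.
by rewrite !big_cons bD bZ IH.
Qed.

Lemma b_combr s vec cf z : b z (comb s vec cf) = \sum_(i <- s) cf i * b z (vec i).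
Proof.
rewrite bsym b_comb; apply: eq_bigr => i _; by rewrite bsym.
Qed.

Definition NDs (s : seq nat) (vec : nat -> V) :=
  forall cf, (forall i, i \in s -> b (comb s vec cf) (vec i) = 0) -> forall i, i \in s -> cf i = 0.

Fixpoint sympl (ps : seq (V * V)) : Prop :=
  match ps with
  | [::] => True
  | p :: ps => b p.1 p.2 = 1 /\
      (forall q, q \in ps -> [/\ b p.1 q.1 = 0, b p.1 q.2 = 0, b p.2 q.1 = 0 & b p.2 q.2 = 0])
      /\ sympl ps
  end.

Lemma symp_main r : forall s vec, size s = r -> uniq s -> NDs s vec ->
  exists ps : seq (V * V), [/\ (2 * size ps)%N = r, sympl ps &
    forall x, (forall i, i \in s -> b x (vec i) = 0) ->
      forall p, p \in ps -> b x p.1 = 0 /\ b x p.2 = 0].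
Proof.
elim/ltn_ind: r => r IH [|i0 rest] vec hs hu hN.
  by exists [::]; split => //; rewrite -hs.
move: hu; rewrite cons_uniq => /andP[ni0 hu].
have [i1 hi1 hb1] : exists2 i1, i1 \in rest & b (vec i0) (vec i1) = 1.
  case: (boolP (has (fun i1 => b (vec i0) (vec i1) != 0) (i0 :: rest))).
    case/hasP => i1; rewrite inE => /orP[/eqP ->|h1 h2].
      by rewrite balt eqxx.
    by exists i1 => //; apply: F2_eq1.
  move/hasPn => H.
  suff: (1 : 'F_2) = 0 by move/eqP; rewrite oner_eq0.
  have <- : ((i0 == i0)%:R : 'F_2) = 1 by rewrite eqxx.
  apply: (hN (fun i => (i == i0)%:R)); last exact: mem_head.
  move=> i hi; rewrite b_comb big_cons eqxx mul1r big_seq big1 ?addr0.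
    by apply/eqP; move: (H i hi); rewrite negbK.
  move=> j hj; have -> : (j == i0) = false by apply/negbTE/eqP => e; rewrite -e hj in ni0.
  by rewrite mul0r.
set w := vec i0; set w' := vec i1.
pose rest' := filter (predC1 i1) rest.
pose phi := fun v : V => v + b v w' *: w + b v w *: w'.
pose vec' := fun i => phi (vec i).
have V2 : forall y : V, y + y = 0.
  by move=> y; rewrite -(scale1r y) -scalerDl F2_add_self scale0r.
have hw01 : b w w' = 1 by [].
have hw10 : b w' w = 1 by rewrite bsym.
have orth0 : forall v, b (phi v) w = 0.
  by move=> v; rewrite /phi !bD !bZ balt hw10 mulr0 addr0 mulr1 F2_add_self.
have orth1 : forall v, b (phi v) w' = 0.
  by move=> v; rewrite /phi !bD !bZ balt hw01 mulr0 addr0 mulr1 F2_add_self.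
have phi_inv : forall v, v = phi v + b v w' *: w + b v w *: w'.
  move=> v; rewrite /phi.
  move: (b v w' *: w) (b v w *: w') => a e.
  by rewrite -[v + a + e + a]addrA (addrC e a) addrA -[v + a + a]addrA V2 addr0 -addrA V2 addr0.
have hu' : uniq rest' by rewrite filter_uniq.
have i1ni0 : i1 != i0 by apply/eqP => e; rewrite -e hi1 in ni0.
have memws : forall i, i \in i0 :: rest -> [\/ i = i0, i = i1 | i \in rest'].
  move=> i; rewrite inE => /orP[/eqP ->|hi]; first by constructor 1.
  case: (eqVneq i i1) => [->|ne]; first by constructor 2.
  by constructor 3; rewrite mem_filter /= ne.
have combE : forall cf, comb (i0 :: rest) vec cf = cf i0 *: w + cf i1 *: w' + comb rest' vec cf.
  move=> cf; rewrite /comb big_cons (bigD1_seq i1) //= big_filter addrA //.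
have hsz : size rest' = (size rest).-1.
  by rewrite /rest' -rem_filter // size_rem.
have hND' : NDs rest' vec'.
  move=> cf' H'.
  pose al := \sum_(i <- rest') cf' i * b (vec i) w'.
  pose be := \sum_(i <- rest') cf' i * b (vec i) w.
  pose cf := fun i => if i == i0 then al else if i == i1 then be else cf' i.
  have e1 : comb rest' vec' cf' = comb rest' vec cf' + al *: w + be *: w'.
    rewrite /comb /vec' /phi /al /be !scaler_suml -!big_split /=.
    apply: eq_bigr => i _; rewrite !scalerDr !scalerA; by [].
  have e2 : comb (i0 :: rest) vec cf = comb rest' vec' cf'.
    rewrite combE e1 /cf eqxx (negbTE i1ni0) eqxx.
    have -> : comb rest' vec (fun i => if i == i0 then al else if i == i1 then be else cf' i) =
       comb rest' vec cf'.
      rewrite /comb big_seq [RHS]big_seq; apply: eq_bigr => i; rewrite mem_filter /= => /andP[h1 h2].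
      have -> : (i == i0) = false by apply/negbTE/eqP => e; rewrite -e h2 in ni0.
      by rewrite (negbTE h1).
    by rewrite addrC addrA.
  have Hz := hN cf.
  have H0 : forall i, i \in i0 :: rest -> b (comb (i0 :: rest) vec cf) (vec i) = 0.
    move=> i /memws [->|->|hi]; rewrite e2.
    - rewrite b_comb big1 // => j _; by rewrite orth0 mulr0.
    - rewrite b_comb big1 // => j _; by rewrite orth1 mulr0.
    - have h3 := H' i hi.
      have h4 : b (comb rest' vec' cf') (vec' i) = b (comb rest' vec' cf') (vec i)
         + b (vec i) w' * b (comb rest' vec' cf') w + b (vec i) w * b (comb rest' vec' cf') w'.
        by rewrite /vec' /phi !bDr !bZr.
      have h5 : b (comb rest' vec' cf') w = 0.
        by rewrite b_comb big1 // => j _; rewrite orth0 mulr0.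
      have h6 : b (comb rest' vec' cf') w' = 0.
        by rewrite b_comb big1 // => j _; rewrite orth1 mulr0.
      by rewrite h5 h6 !mulr0 !addr0 h3 in h4.
  move=> i hi.
  have := Hz H0 i; rewrite /cf.
  have hi' : i \in rest by move: hi; rewrite mem_filter => /andP[].
  have -> : (i == i0) = false by apply/negbTE/eqP => e; rewrite -e hi' in ni0.
  have -> : (i == i1) = false by move: hi; rewrite mem_filter => /andP[/negbTE].
  by apply; rewrite inE hi' orbT.
have hlt : (size rest' < r)%N by rewrite hsz -hs /=; case: (size rest) => //=.
have [ps' [hps1 hps2 hps3]] := IH _ hlt rest' vec' erefl hu' hND'.
have orth_w : forall p, p \in ps' -> b w p.1 = 0 /\ b w p.2 = 0.
  apply: hps3 => i _; by rewrite bsym orth0.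
have orth_w' : forall p, p \in ps' -> b w' p.1 = 0 /\ b w' p.2 = 0.
  apply: hps3 => i _; by rewrite bsym orth1.
exists ((w, w') :: ps'); split => /=.
- have : (0 < size rest)%N by case: (rest) hi1.
  rewrite -hs /= hsz in hps1 *; case: (size rest) hps1 => [|k] //= h _; lia.
- split => //; split => // q hq.
  by case: (orth_w q hq) => [-> ->]; case: (orth_w' q hq) => [-> ->].
- move=> x hx p; rewrite inE => /orP[/eqP -> /=|hp].
    by split; apply: hx; rewrite ?mem_head // inE hi1 orbT.
  apply: hps3 hp => i hi; rewrite /vec' /phi !bDr !bZr.
  have hi' : i \in rest by move: hi; rewrite mem_filter => /andP[].
  rewrite !hx ?mem_head ?inE ?hi1 ?hi' ?orbT //.
  by rewrite !mulr0 !addr0.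
Qed.

End Symp.

Lemma length_facts (xi : label) (n : nat) :
  palindrome xi.1 -> palindrome xi.2 -> has_length xi (2 * n + 1)%N ->
  [/\ (forall p, coefL xi.1 p != 0 -> - n%:Z <= p <= n%:Z),
      (forall p, coefL xi.2 p != 0 -> - n%:Z <= p <= n%:Z) &
      (coefL xi.1 n%:Z != 0 \/ coefL xi.2 n%:Z != 0)].
Proof.
move=> Hp1 Hp2 [lo [hi [nlo nhi Hb Hl]]].
have refl : forall x, nonid xi x -> nonid xi (- x).
  by move=> x; rewrite /nonid -(Hp1 x) -(Hp2 x).
have := Hb _ (refl _ nlo); have := Hb _ (refl _ nhi) => h1 h2.
have ehi : hi = n%:Z by move: Hl h1 h2; lia.
split.
- by move=> p hp; have := Hb p (or_introl hp); lia.
- by move=> p hp; have := Hb p (or_intror hp); lia.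
- by rewrite -ehi.
Qed.

Section Lower.
Variable xi : label.
Variable n : nat.
Variable c : int.
Hypothesis Hs1 : forall p, coefL xi.1 p != 0 -> - n%:Z <= p <= n%:Z.
Hypothesis Hs2 : forall p, coefL xi.2 p != 0 -> - n%:Z <= p <= n%:Z.
Hypothesis Hn : coefL xi.1 n%:Z != 0 \/ coefL xi.2 n%:Z != 0.
Hypothesis Hp1 : palindrome xi.1.
Hypothesis Hp2 : palindrome xi.2.
Hypothesis Hcop : lcoprime xi.1 xi.2.

Definition Lv (v : 'rV['F_2]_(n + n)) : laurent :=
  mkL (c - n%:Z) (\poly_(i < n + n) (if insub i is Some j then v 0 j else 0)).

Lemma mid_Lv v : mid n c (Lv v) = v.
Proof.
apply/rowP => i; rewrite mxE coefL_mkL /pos.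
have -> : c - n%:Z + i%:Z - (c - n%:Z) = i%:Z by ring.
by rewrite lez_nat coef_poly ltn_ord valK.
Qed.

Definition bf (v w : 'rV['F_2]_(n + n)) : 'F_2 := (v *m Omm xi n c *m w^T) 0 0.

Lemma bf_sigma v w : bf v w = sigmaA c (lab xi (Lv v)) (lab xi (Lv w)).
Proof.
by rewrite (@sigma_mid_mx xi n c Hs1 Hs2 Hp1 Hp2 _ _ _ _ (eqlab_lab xi _) (eqlab_lab xi _)) !mid_Lv.
Qed.

Lemma bfD x y z : bf (x + y) z = bf x z + bf y z.
Proof. by rewrite /bf !mulmxDl mxE. Qed.

Lemma bfZ a x z : bf (a *: x) z = a * bf x z.
Proof. by rewrite /bf -!scalemxAl mxE. Qed.

Lemma bfsym x y : bf x y = bf y x.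
Proof. by rewrite !bf_sigma sigmaA_sym. Qed.

Lemma bfalt x : bf x x = 0.
Proof. by rewrite bf_sigma sigmaA_self. Qed.

Lemma supp_both_lab v w : bf v w = 1 -> supp_both c (lab xi (Lv v)).
Proof.
move=> h; split.
  apply: NNPP => H.
  have : bf v w = 0.
    rewrite bf_sigma sigmaA_sumZ; apply: sumZ0 => x /andP[_ hx].
    have : ~ nonid (lab xi (Lv v)) x by move=> nz; apply: H; exists x.
    rewrite /nonid /Tm => nn.
    have -> : coefL (lab xi (Lv v)).1 x = 0 by apply/eqP/negPn/negP => nz; apply: nn; left.
    have -> : coefL (lab xi (Lv v)).2 x = 0 by apply/eqP/negPn/negP => nz; apply: nn; right.
    by rewrite !mul0r addr0.
  by rewrite h => /eqP; rewrite oner_eq0.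
apply: NNPP => H.
have HA : supp_in_A c (lab xi (Lv v)).
  move=> x nz; case: (ltP x c) => // hx; exfalso; apply: H; exists x; split => //.
have : bf w v = 0.
  rewrite bf_sigma.
  exact: (ab Hs1 Hs2 Hn Hp1 Hp2 (eqlab_lab xi _) (eqlab_lab xi _) HA).
by rewrite bfsym h => /eqP; rewrite oner_eq0.
Qed.

Lemma sympl_nth (ps : seq ('rV['F_2]_(n + n) * 'rV['F_2]_(n + n))) :
  sympl bf ps -> forall i j, (i < size ps)%N -> (j < size ps)%N -> i != j ->
  [/\ bf (nth (0, 0) ps i).1 (nth (0, 0) ps j).1 = 0,
      bf (nth (0, 0) ps i).1 (nth (0, 0) ps j).2 = 0
    & bf (nth (0, 0) ps i).2 (nth (0, 0) ps j).2 = 0].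
Proof.
elim: ps => [|p ps IH] //= [h1 [h2 h3]] [|i] [|j] //= hi hj hij.
- by case: (h2 (nth (0, 0) ps j)); rewrite ?mem_nth.
- case: (h2 (nth (0, 0) ps i)); rewrite ?mem_nth // => a b e d.
  by rewrite bfsym a bfsym e bfsym d.
- by apply: IH.
Qed.

Lemma sympl_diag (ps : seq ('rV['F_2]_(n + n) * 'rV['F_2]_(n + n))) :
  sympl bf ps -> forall i, (i < size ps)%N -> bf (nth (0, 0) ps i).1 (nth (0, 0) ps i).2 = 1.
Proof.
elim: ps => [|p ps IH] //= [h1 [h2 h3]] [|i] //= hi.
by apply: IH.
Qed.

Lemma lower : exists eta zeta : 'I_n -> label, bell_family xi c eta zeta.
Proof.
pose vec := fun i : nat => (\row_(j < n + n) ((j : nat) == i)%:R : 'rV['F_2]_(n + n)).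
have hND : NDs bf (iota 0 (n + n)) vec.
  move=> cf H.
  pose u := comb (iota 0 (n + n)) vec cf.
  have hu : u = \row_(j < n + n) cf j.
    apply/rowP => j; rewrite /u /comb summxE mxE.
    rewrite (bigD1_seq (nat_of_ord j)) ?mem_iota ?iota_uniq //= !mxE eqxx mulr1.
    rewrite big1 ?addr0 // => i hi; rewrite !mxE; case: eqP => [e|]; last by rewrite mulr0.
    by rewrite e eqxx in hi.
  have hz : u *m Omm xi n c = 0.
    apply/rowP => k; have := H k; rewrite mem_iota /= add0n ltn_ord => /(_ isT).
    rewrite /bf mxE => h0; rewrite [RHS]mxE -h0.
    rewrite (bigD1 k) //= big1 ?addr0.
      by rewrite [X in _ * X]mxE [X in _ * X]mxE eqxx mulr1.
    move=> i hi; rewrite [X in _ * X]mxE [X in _ * X]mxE.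
    by rewrite (negbTE hi : (nat_of_ord i == nat_of_ord k) = false) mulr0.
  have := ND Hs1 Hs2 Hn Hp1 Hp2 Hcop hz => u0 i; rewrite mem_iota add0n /= => hi.
  by have := congr1 (fun M : 'rV['F_2]_(n + n) => M 0 (Ordinal hi)) u0; rewrite hu !mxE.
have [ps [hsz hsp hprop]] := symp_main bfD bfZ bfsym bfalt (size_iota 0 (n + n)) (iota_uniq 0 (n + n)) hND.
have hsz' : size ps = n by lia.
pose e (i : 'I_n) := (nth (0, 0) ps i).1.
pose f (i : 'I_n) := (nth (0, 0) ps i).2.
have hef : forall i : 'I_n, bf (e i) (f i) = 1.
  by move=> i; apply: sympl_diag; rewrite ?hsz'.
exists (fun i => lab xi (Lv (e i))), (fun i => lab xi (Lv (f i))).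
split.
- by move=> i; split; [exists (Lv (e i)) | exists (Lv (f i))]; split.
- move=> i; split; first exact: (supp_both_lab (hef i)).
  by apply: (supp_both_lab (w := e i)); rewrite bfsym hef.
- by move=> i; rewrite -bf_sigma hef.
- move=> i j hij; rewrite -!bf_sigma.
  by apply: (sympl_nth hsp); rewrite ?hsz' ?ltn_ord.
- move=> i theta [g hg] HA; split;
  exact: (ab Hs1 Hs2 Hn Hp1 Hp2 (eqlab_lab xi _) hg HA).
Qed.

End Lower.

Unset Implicit Arguments.

Theorem mainTheorem14 (xi : label) (n : nat) :
  palindrome xi.1 -> palindrome xi.2 -> lcoprime xi.1 xi.2 ->
  has_length xi (2 * n + 1)%N ->
  forall c : int, entanglement_is xi c n.
Proof.
move=> Hp1 Hp2 Hcop Hl c.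
have [Hs1 Hs2 Hn] := length_facts Hp1 Hp2 Hl.
split.
  exact: (lower c Hs1 Hs2 Hn Hp1 Hp2 Hcop).
by move=> k eta zeta hb; apply: (upper Hs1 Hs2 Hp1 Hp2 hb).
Qed.
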